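(* For each integer $L\ge 2$ there is an irrational number $x=[a_0,a_1,a_2,\ldots]$ with all $a_i\in\{1,2,3,4\}$ and periodic sequence of partial quotients, such that its Jacobi sequence is periodic with repeating block $1,1,\ldots,1,*$ of length $L$ (the value $1$ repeated $L-1$ times followed by $*$).
   Context: For $x\in\mathbb{R}\setminus\mathbb{Q}$ with regular continued fraction expansion $x=[a_0,a_1,a_2,\ldots]$, the convergents $s_k/t_k$ are defined by $s_{-1}=1$, $s_0=a_0$, $s_k=a_ks_{k-1}+s_{k-2}$ and $t_{-1}=0$, $t_0=1$, $t_k=a_kt_{k-1}+t_{k-2}$ for $k\ge1$. For an odd natural number $n$ and an integer $m$ coprime to $n$, $\left(\frac{m}{n}\right)$ is the usual Jacobi symbol (equal to $1$ if $n=1$); if $n$ is even and $\gcd(m,n)=1$, one sets $\left(\frac{m}{n}\right)=*$, a fixed symbol different from $\pm1$. The Jacobi sequence of $x$ is $\left(\frac{s_k}{t_k}\right)$, $k\ge 0$. *)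

(* Defs.v *)
From mathcomp Require Import all_boot all_algebra.
Set Implicit Arguments. Unset Strict Implicit. Unset Printing Implicit Defensive.
Import GRing.Theory Num.Theory.
Local Open Scope ring_scope.

(* Convergents of the regular continued fraction [a_0, a_1, ...] with all
   a_i natural numbers.  cf_conv a k = (s_k, s_(k-1), t_k, t_(k-1)) with
   s_(-1) = 1, s_0 = a_0, t_(-1) = 0, t_0 = 1,
   s_k = a_k s_(k-1) + s_(k-2), t_k = a_k t_(k-1) + t_(k-2). *)
Fixpoint cf_conv (a : nat -> nat) (k : nat) : nat * nat * nat * nat :=
  match k with
  | 0 => (a 0%N, 1%N, 1%N, 0%N)
  | k'.+1 =>
      let: (s, s', t, t') := cf_conv a k' in
      (a k * s + s', s, a k * t + t', t)%N
  end.

Definition cf_num (a : nat -> nat) (k : nat) : nat := (cf_conv a k).1.1.1.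
Definition cf_den (a : nat -> nat) (k : nat) : nat := (cf_conv a k).1.2.

Definition legendre (m p : nat) : int :=
  if (p %| m)%N then 0
  else if [exists x : 'I_p, (x * x == m %[mod p])%N] then 1 else -1.

Definition jacobi (m n : nat) : int :=
  \prod_(p <- primes n) legendre m p ^+ logn p n.

Inductive jac_val := JInt of int | JStar.

Definition jac_sym (m n : nat) : jac_val :=
  if odd n then JInt (jacobi m n) else JStar.

Definition jacobi_seq (a : nat -> nat) (k : nat) : jac_val :=
  jac_sym (cf_num a k) (cf_den a k).

(* Main.v *)
Require Import Defs.
From mathcomp Require Import all_boot all_algebra.
From mathcomp Require Import zify ring lra finfield.
Set Implicit Arguments. Unset Strict Implicit. Unset Printing Implicit Defensive.
Import GRing.Theory Num.Theory.

Section Prime.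
Local Open Scope ring_scope.

Lemma Fp_nat_eq0 p n : prime p -> ((n%:R : 'F_p) == 0) = (p %| n)%N.
Proof. by move=> pp; rewrite -val_eqE /= val_Fp_nat. Qed.

Lemma Fp_nat_eq p m n : prime p -> ((m%:R : 'F_p) == n%:R) = (m == n %[mod p])%N.
Proof. by move=> pp; rewrite -val_eqE /= !val_Fp_nat. Qed.

Lemma oddp_half p : odd p -> p = (p./2 * 2).+1%N.
Proof. by move=> op; rewrite -{1}(odd_double_half p) op -muln2. Qed.

Lemma oddp_pred p : odd p -> p.-1 = (p./2 * 2)%N.
Proof. by move=> op; rewrite {1}(oddp_half op). Qed.

Lemma Fp_fermat p (x : 'F_p) : prime p -> x != 0 -> x ^+ p.-1 = 1.
Proof.
move=> pp x0; have := expf_card x; rewrite card_Fp // => h.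
have p0 : (0 < p)%N by apply: prime_gt0.
have h' : x ^+ (p.-1).+1 = x by rewrite prednK.
move: h'; rewrite exprSr => h'.
by apply: (mulIf x0); rewrite h' mul1r.
Qed.

Lemma Fp_sq_pow p (x : 'F_p) : prime p -> odd p -> x != 0 -> x ^+ p./2 = 1 \/ x ^+ p./2 = -1.
Proof.
move=> pp op x0; have := Fp_fermat pp x0.
rewrite (oddp_pred op) exprM => /eqP; rewrite sqrf_eq1 => /orP[] /eqP; tauto.
Qed.

Lemma euler p m : prime p -> odd p -> ~~ (p %| m)%N ->
  ((legendre m p)%:~R : 'F_p) = (m%:R) ^+ p./2.
Proof.
move=> pp op npm.
have m0 : (m%:R : 'F_p) != 0 by rewrite Fp_nat_eq0.
rewrite /legendre (negbTE npm).
case: existsP => [[x /eqP hx] | nex].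
  have hx' : (m%:R : 'F_p) = (x%:R) ^+ 2.
    by apply/eqP; rewrite -natrX Fp_nat_eq // expnS expn1 hx.
  have x0 : (x%:R : 'F_p) != 0 by apply: contraNneq m0 => e; rewrite hx' e expr0n.
  by rewrite hx' -exprM mulnC -(oddp_pred op) Fp_fermat.
case: (Fp_sq_pow pp op m0) => // h1; exfalso.
pose h := p./2.
have h0 : (0 < h)%N.
  have p2 : (2 < p)%N.
    have := prime_gt1 pp; rewrite leq_eqVlt => /orP[/eqP e|//].
    by move: op; rewrite -e.
  rewrite /h; have := oddp_half op; lia.
pose P := ('X^h - 1 : {poly 'F_p}).
pose rs := (m%:R : 'F_p) :: [seq (i.+1)%:R ^+ 2 | i <- iota 0 h].
have sz : size P = h.+1 by rewrite size_Xn_sub_1.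
have hP : P != 0 by rewrite -size_poly_eq0 sz.
have hp1 : (h.*2.+1 = p)%N by rewrite -muln2 -oddp_half.
have := @max_poly_roots _ P rs hP.
rewrite sz /rs /= size_map size_iota ltnn => H; suff: false by []; apply: H.
  rewrite /root !hornerE h1 subrr eqxx /=.
  apply/allP => y /mapP [i]; rewrite mem_iota add0n => /andP[_ hi] ->.
  rewrite /root !hornerE -exprM mulnC -(oddp_pred op) Fp_fermat ?subrr //.
  rewrite Fp_nat_eq0 //; apply/negP => /(dvdn_leq (ltn0Sn _)); lia.
rewrite /= map_inj_in_uniq ?iota_uniq ?andbT.
  apply/mapP => [[i]]; rewrite mem_iota add0n => /andP[_ hi] hm.
  apply: nex; have hip : (i.+1 < p)%N by lia.
  exists (Ordinal hip); rewrite /= -Fp_nat_eq // natrM -expr2 -hm //.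
move=> i j; rewrite !mem_iota !add0n => /andP[_ hi] /andP[_ hj] /eqP.
rewrite eqf_sqr => /orP[|] /eqP e.
  move/eqP: e; rewrite Fp_nat_eq // => /eqP; rewrite !modn_small; [by case|lia|lia].
exfalso; move/eqP: e; rewrite -subr_eq0 opprK -natrD Fp_nat_eq0 //.
move/(dvdn_leq (ltn0Sn _)); change ((p <= (i.+1 + j.+1))%N -> False); lia.
Qed.

Definition sgn1 (a : int) := (a == 1) || (a == -1).

Lemma sgn1M a b : sgn1 a -> sgn1 b -> sgn1 (a * b).
Proof. by move=> /orP[]/eqP-> /orP[]/eqP->; rewrite /sgn1 /=. Qed.

Lemma sgn1X n : sgn1 ((-1) ^+ n).
Proof. by rewrite /sgn1 -signr_odd; case: (odd n); rewrite ?expr1 ?expr0 eqxx ?orbT. Qed.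

Lemma Fp_one_neq p : prime p -> odd p -> (1 : 'F_p) != -1.
Proof.
move=> pp op; apply/negP => /eqP e.
have : (2%:R : 'F_p) == 0 by rewrite mulr2n {1}e addNr.
rewrite Fp_nat_eq0 // dvdn_prime2 // => /eqP ep.
by move: op; rewrite ep.
Qed.

Lemma sgn_inj p (a b : int) : prime p -> odd p -> sgn1 a -> sgn1 b ->
  (a%:~R : 'F_p) = b%:~R -> a = b.
Proof.
move=> pp op /orP[]/eqP-> /orP[]/eqP-> //; rewrite ?intrN ?mulr1z => e;
  move/negP: (Fp_one_neq pp op); case; apply/eqP => //; exact: esym.
Qed.

Lemma legendre_sgn1 m p : ~~ (p %| m)%N -> sgn1 (legendre m p).
Proof.
by move=> h; rewrite /legendre (negbTE h); case: ifP; rewrite /sgn1 eqxx ?orbT.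
Qed.

Lemma legendre0 m p : (p %| m)%N -> legendre m p = 0.
Proof. by move=> h; rewrite /legendre h. Qed.

Lemma legendre_mod m p : (0 < p)%N -> legendre (m %% p) p = legendre m p.
Proof.
by move=> p0; rewrite /legendre /dvdn !modn_mod.
Qed.

Lemma legendre_M m n p : prime p -> odd p ->
  legendre (m * n) p = legendre m p * legendre n p.
Proof.
move=> pp op.
have [pm|pm] := boolP (p %| m)%N.
  by rewrite (legendre0 pm) (legendre0 (dvdn_mulr n pm)) mul0r.
have [pn|pn] := boolP (p %| n)%N.
  by rewrite (legendre0 pn) (legendre0 (dvdn_mull m pn)) mulr0.
have pmn : ~~ (p %| m * n)%N by rewrite Euclid_dvdM // negb_or pm pn.
apply: (@sgn_inj p) => //; rewrite ?legendre_sgn1 ?sgn1M ?legendre_sgn1 //.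
by rewrite intrM !euler // natrM exprMn.
Qed.

Lemma legendre_neg1 p : prime p -> odd p -> legendre p.-1 p = (-1) ^+ p./2.
Proof.
move=> pp op.
have p0 := prime_gt0 pp.
have np : ~~ (p %| p.-1)%N.
  apply/negP => /(dvdn_leq _); rewrite -ltnS prednK //.
  have := prime_gt1 pp; lia.
apply: (@sgn_inj p) => //; rewrite ?legendre_sgn1 ?sgn1X //.
rewrite euler // rmorphXn /=.
have -> : (p.-1%:R : 'F_p) = -1.
  by apply/eqP; rewrite -subr_eq0 opprK natr1 prednK // pchar_Fp_0.
by [].
Qed.


Lemma prod_sign (T : Type) (R : pzRingType) (s : seq T) (P : pred T) :
  \prod_(x <- s) (if P x then -1 else 1 : R) = (-1) ^+ count P s.
Proof.
elim: s => [|x s IH]; first by rewrite big_nil expr0.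
by rewrite big_cons IH /=; case: (P x); rewrite ?mul1r // exprS.
Qed.

Lemma prod_const_seq (T : Type) (R : comPzRingType) (s : seq T) (c : R) :
  \prod_(x <- s) c = c ^+ size s.
Proof.
elim: s => [|x s IH]; first by rewrite big_nil expr0.
by rewrite big_cons IH /= exprS.
Qed.

Lemma prod_nat_neq0 p (s : seq nat) : prime p -> all (fun k => (0 < k < p)%N) s ->
  \prod_(k <- s) (k%:R : 'F_p) != 0.
Proof.
move=> pp; elim: s => [|x s IH]; first by rewrite big_nil oner_neq0.
rewrite /= big_cons => /andP[/andP[x0 xp] hs]; rewrite mulf_neq0 ?IH //.
by rewrite Fp_nat_eq0 //; apply/negP => /(dvdn_leq x0); rewrite leqNgt xp.
Qed.

Definition gfold p a k := let r := ((k * a) %% p)%N in if (r <= p./2)%N then r else (p - r)%N.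

Lemma gfold_sgn p a k : prime p -> odd p ->
  ((k * a)%:R : 'F_p) = (if (p./2 < (k * a) %% p)%N then -1 else 1) * (gfold p a k)%:R.
Proof.
move=> pp op.
rewrite /gfold -(Fp_nat_mod pp (k * a)); case: leqP => hr; first by rewrite mul1r.
rewrite mulN1r natrB; last by rewrite ltnW // ltn_mod prime_gt0.
by rewrite pchar_Fp_0 // sub0r opprK.
Qed.

Lemma gfold_perm p a : prime p -> odd p -> ~~ (p %| a)%N ->
  perm_eq (map (gfold p a) (iota 1 p./2)) (iota 1 p./2).
Proof.
move=> pp op pa.
set h := p./2.
have hp : (h.*2.+1 = p)%N by rewrite /h -muln2 -oddp_half.
have p0 := prime_gt0 pp.
set s := iota 1 h.
have ins k : k \in s -> (0 < k < p)%N.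
  by rewrite mem_iota => /andP[k1 kh]; apply/andP; split; lia.
have rne0 k : k \in s -> (0 < (k * a) %% p)%N.
  move=> /ins /andP[k0 kp]; rewrite lt0n; apply/negP => /eqP r0.
  have : (p %| k * a)%N by rewrite /dvdn r0.
  rewrite Euclid_dvdM // (negbTE pa) orbF => /(dvdn_leq k0); lia.
have rlt k : ((k * a) %% p < p)%N by rewrite ltn_mod.
have sgnf k := gfold_sgn a k pp op.
have fin k : k \in s -> gfold p a k \in s.
  move=> ks; have := rne0 k ks; have := rlt k; rewrite /gfold -/h mem_iota.
  move: ((k * a) %% p)%N => r; case: (leqP r h) => hr rp r0; apply/andP; split; lia.
have finj : {in s &, injective (gfold p a)}.
  move=> k l ks ls e.
  have ekl : ((k * a)%:R : 'F_p) = (k * a)%:R by [].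
  have := sgnf k; have := sgnf l; rewrite e.
  have := ins k ks; have := ins l ls.
  have kh : (k <= h)%N by move: ks; rewrite mem_iota; lia.
  have lh : (l <= h)%N by move: ls; rewrite mem_iota; lia.
  have aF : (a%:R : 'F_p) != 0 by rewrite Fp_nat_eq0.
  move=> /andP[l0 lp] /andP[k0 kp].
  case: ifP => _; case: ifP => _ el ek.
  - have : ((k * a)%:R : 'F_p) = (l * a)%:R by rewrite ek el.
    rewrite !natrM => /(mulIf aF) /eqP; rewrite Fp_nat_eq // !modn_small //.
    by move/eqP.
  - have : (((k + l) * a)%:R : 'F_p) = 0 by rewrite natrM natrD mulrDl -!natrM ek el mulN1r mul1r ?addrN ?addNr.
    move/eqP; rewrite Fp_nat_eq0 // Euclid_dvdM // (negbTE pa) orbF => /(dvdn_leq _) => H.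
    have : (p <= k + l)%N by apply: H; lia.
    lia.
  - have : (((k + l) * a)%:R : 'F_p) = 0 by rewrite natrM natrD mulrDl -!natrM ek el mulN1r mul1r ?addrN ?addNr.
    move/eqP; rewrite Fp_nat_eq0 // Euclid_dvdM // (negbTE pa) orbF => /(dvdn_leq _) => H.
    have : (p <= k + l)%N by apply: H; lia.
    lia.
  - have : ((k * a)%:R : 'F_p) = (l * a)%:R by rewrite ek el.
    rewrite !natrM => /(mulIf aF) /eqP; rewrite Fp_nat_eq // !modn_small //.
    by move/eqP.
have us : uniq s by rewrite iota_uniq.
have ums : uniq (map (gfold p a) s) by rewrite map_inj_in_uniq.
have sub : {subset map (gfold p a) s <= s}.
  by move=> y /mapP [k ks ->]; apply: fin.
have [_ eqs] := uniq_min_size ums sub (eq_leq (esym (size_map _ _))).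
by apply: uniq_perm.
Qed.

Lemma gauss_lemma p a : prime p -> odd p -> ~~ (p %| a)%N ->
  ((a%:R : 'F_p) ^+ p./2) = (-1) ^+ count (fun k => p./2 < (k * a) %% p)%N (iota 1 p./2).
Proof.
move=> pp op pa.
set h := p./2.
set s := iota 1 h.
have hp : (h.*2.+1 = p)%N by rewrite /h -muln2 -oddp_half.
have pe := gfold_perm pp op pa.
have sgnf k := gfold_sgn a k pp op.
have P0 : \prod_(k <- s) (k%:R : 'F_p) != 0.
  apply: prod_nat_neq0 => //; apply/allP => k; rewrite mem_iota => /andP[k1 kh].
  apply/andP; split; lia.
apply: (mulIf P0).
have -> : (-1) ^+ count (fun k => h < (k * a) %% p)%N s * \prod_(k <- s) (k%:R : 'F_p)
   = \prod_(k <- s) ((k * a)%:R : 'F_p).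
  rewrite (eq_bigr _ (fun k _ => sgnf k)) big_split /= prod_sign; congr (_ * _).
  by rewrite -(big_map (gfold p a) xpredT (fun k => (k%:R : 'F_p))) (perm_big _ pe).
rewrite [RHS](eq_bigr (fun k => a%:R * k%:R)); last by move=> k _; rewrite natrM mulrC.
by rewrite big_split /= prod_const_seq size_iota.
Qed.


Lemma odd_sum_eq (T : Type) (s : seq T) (F G : T -> nat) :
  (forall x, odd (F x) = odd (G x)) ->
  odd (\sum_(x <- s) F x) = odd (\sum_(x <- s) G x).
Proof.
move=> e; elim: s => [|x s IH]; first by rewrite !big_nil.
by rewrite !big_cons !oddD IH e.
Qed.

Lemma sum_bool (T : Type) (s : seq T) (P : pred T) :
  (\sum_(x <- s) (P x : nat) = count P s)%N.
Proof.
elim: s => [|x s IH]; first by rewrite big_nil.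
by rewrite big_cons IH.
Qed.

Lemma eisenstein p a : prime p -> odd p -> odd a -> ~~ (p %| a)%N ->
  odd (count (fun k => p./2 < (k * a) %% p)%N (iota 1 p./2)) =
  odd (\sum_(k <- iota 1 p./2) (k * a) %/ p)%N.
Proof.
move=> pp op oa pa.
set h := p./2; set s := iota 1 h.
set C := count _ s; set T := (\sum_(k <- s) (k * a) %/ p)%N.
have p0 := prime_gt0 pp.
have pe := gfold_perm pp op pa.
have e1 : (\sum_(k <- s) (k * a) = T * p + \sum_(k <- s) (k * a) %% p)%N.
  rewrite /T big_distrl -big_split /=; apply: eq_bigr => k _; exact: divn_eq.
have e2 : (\sum_(k <- s) (k * a) = (\sum_(k <- s) k) * a)%N by rewrite big_distrl.
have e3 : (\sum_(k <- s) gfold p a k = \sum_(k <- s) k)%N.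
  by rewrite -(big_map (gfold p a) xpredT (fun k => k)) (perm_big _ pe).
have e4 : odd (\sum_(k <- s) (k * a) %% p)%N =
          odd (\sum_(k <- s) (gfold p a k + (h < (k * a) %% p)%N))%N.
  apply: odd_sum_eq => k; rewrite /gfold -/h.
  have : ((k * a) %% p < p)%N by rewrite ltn_mod.
  move: ((k * a) %% p)%N => r rp.
  case: (leqP r h) => hr; first by rewrite addn0.
  rewrite addn1 /=.
  by rewrite oddB ?(ltnW rp) // op; case: (odd r).
move: e4; rewrite big_split /= e3 sum_bool -/C => e4.
have := congr1 odd (etrans (esym e2) e1).
rewrite oddD oddM oa andbT oddM op andbT e4 oddD.
by case: (odd (\sum_(k <- s) k)%N); case: (odd T); case: (odd C).
Qed.


Lemma sum_le_min n m : (\sum_(j <- iota 1 n) (j <= m : nat) = minn n m)%N.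
Proof.
elim: n => [|n IH]; first by rewrite big_nil min0n.
rewrite -[n.+1]addn1 iotaD big_cat big_seq1 IH add1n.
by case: (leqP n.+1 m) => h /=; lia.
Qed.

Lemma sum_const_nat (T : Type) (s : seq T) (c : nat) : (\sum_(x <- s) c = size s * c)%N.
Proof.
elim: s => [|x s IH]; first by rewrite big_nil.
by rewrite big_cons IH /= mulSn.
Qed.

Lemma lat_count p q k : prime p -> prime q -> p != q -> odd p -> odd q ->
  (0 < k <= p./2)%N ->
  ((k * q) %/ p = \sum_(j <- iota 1 q./2) (j * p < k * q : nat))%N.
Proof.
move=> pp qp pq op oq /andP[k0 kh].
have p0 := prime_gt0 pp.
have hp : (p./2.*2.+1 = p)%N by rewrite -muln2 -oddp_half.
have hq : (q./2.*2.+1 = q)%N by rewrite -muln2 -oddp_half.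
have ne j : (j * p != k * q)%N.
  apply/negP => /eqP e.
  have : (p %| k * q)%N by rewrite -e dvdn_mull.
  rewrite Euclid_dvdM // (dvdn_prime2 pp qp) (negbTE pq) orbF => /(dvdn_leq k0).
  lia.
rewrite (eq_bigr (fun j => (j <= (k * q) %/ p : nat))); last first.
  by move=> j _; rewrite leq_divRL // ltn_neqAle (ne j).
have le : ((k * q) %/ p <= q./2)%N.
  rewrite -ltnS ltn_divLR //.
  set h := p./2 in hp kh *; set h' := q./2 in hq *.
  nia.
rewrite sum_le_min; lia.
Qed.

Lemma lattice p q : prime p -> prime q -> p != q -> odd p -> odd q ->
  (\sum_(k <- iota 1 p./2) (k * q) %/ p + \sum_(j <- iota 1 q./2) (j * p) %/ q
   = p./2 * q./2)%N.
Proof.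
move=> pp qp pq op oq.
have p0 := prime_gt0 pp.
have hp : (p./2.*2.+1 = p)%N by rewrite -muln2 -oddp_half.
have e1 : (\sum_(k <- iota 1 p./2) (k * q) %/ p =
    \sum_(k <- iota 1 p./2) \sum_(j <- iota 1 q./2) (j * p < k * q : nat))%N.
  rewrite big_seq [RHS]big_seq; apply: eq_bigr => k.
  by rewrite mem_iota => /andP[k1 kh]; apply: lat_count => //; apply/andP; split; lia.
have e2 : (\sum_(j <- iota 1 q./2) (j * p) %/ q =
    \sum_(j <- iota 1 q./2) \sum_(k <- iota 1 p./2) (k * q < j * p : nat))%N.
  rewrite big_seq [RHS]big_seq; apply: eq_bigr => j.
  rewrite mem_iota => /andP[j1 jh]; apply: lat_count => //; last by apply/andP; split; lia.
  by rewrite eq_sym.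
rewrite e1 e2 [X in (_ + X)%N]exchange_big -big_split /=.
rewrite big_seq (eq_bigr (fun _ => q./2)); last first.
  move=> k; rewrite mem_iota => /andP[k1 kh].
  rewrite -big_split /= big_seq (eq_bigr (fun _ => 1%N)); last first.
    move=> j _; case: (ltngtP (j * p) (k * q)) => // e.
    exfalso.
    have : (p %| k * q)%N by rewrite -e dvdn_mull.
    rewrite Euclid_dvdM // (dvdn_prime2 pp qp) (negbTE pq) orbF => /(dvdn_leq _).
    move=> H; have := H k1; lia.
  by rewrite -big_seq sum_const_nat size_iota muln1.
by rewrite -big_seq sum_const_nat size_iota.
Qed.


Lemma legendre_gauss p a : prime p -> odd p -> odd a -> ~~ (p %| a)%N ->
  legendre a p = (-1) ^+ (\sum_(k <- iota 1 p./2) (k * a) %/ p)%N.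
Proof.
move=> pp op oa pa.
rewrite -signr_odd -eisenstein // signr_odd.
apply: (@sgn_inj p) => //; rewrite ?legendre_sgn1 ?sgn1X //.
by rewrite euler // gauss_lemma // rmorphXn rmorphN1.
Qed.

Lemma legendre_recip p q : prime p -> prime q -> p != q -> odd p -> odd q ->
  legendre q p * legendre p q = (-1) ^+ (p./2 * q./2).
Proof.
move=> pp qp pq op oq.
have npq : ~~ (p %| q)%N by rewrite (dvdn_prime2 pp qp).
have nqp : ~~ (q %| p)%N by rewrite (dvdn_prime2 qp pp) eq_sym.
by rewrite !legendre_gauss // -exprD lattice.
Qed.


Lemma jacobi_range m n N : (0 < n)%N -> (n < N)%N ->
  jacobi m n = \prod_(0 <= p < N) legendre m p ^+ logn p n.
Proof.
move=> n0 nN; rewrite /jacobi -(filter_pi_of nN) big_filter big_mkcond /=.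
apply: eq_bigr => p _; case: ifP => //.
move=> hp; suff -> : logn p n = 0%N by rewrite expr0.
apply/eqP; rewrite -leqn0 leqNgt logn_gt0; apply/negP => h; move: hp.
by rewrite /= h.
Qed.

Lemma jacobi1n m : jacobi m 1 = 1.
Proof. by rewrite /jacobi (_ : primes 1 = [::]) // big_nil. Qed.

Lemma jacobi_prime m p : prime p -> jacobi m p = legendre m p.
Proof. by move=> pp; rewrite /jacobi primes_prime // big_seq1 logn_prime // eqxx expr1. Qed.

Lemma jacobiMr m a b : (0 < a)%N -> (0 < b)%N -> jacobi m (a * b) = jacobi m a * jacobi m b.
Proof.
move=> a0 b0.
have ab0 : (0 < a * b)%N by rewrite muln_gt0 a0.
rewrite !(@jacobi_range m _ (a * b).+1) // ?ltnS ?leq_pmulr ?leq_pmull //.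
rewrite -big_split /=; apply: eq_bigr => p _; by rewrite lognM // exprD.
Qed.

Lemma primes_odd n p : odd n -> p \in primes n -> odd p.
Proof.
move=> on; rewrite mem_primes => /and3P[pp n0 pn].
apply: contraTT on; rewrite -!dvdn2 => ep.
exact: dvdn_trans pn.
Qed.

Lemma jacobiMl a b n : odd n -> jacobi (a * b) n = jacobi a n * jacobi b n.
Proof.
move=> on; rewrite /jacobi -big_split /= big_seq [RHS]big_seq.
apply: eq_bigr => p hp; rewrite -exprMn legendre_M //; last exact: primes_odd hp.
by move: hp; rewrite mem_primes => /and3P[].
Qed.

Lemma jacobi_mod a b n : (a = b %[mod n])%N -> jacobi a n = jacobi b n.
Proof.
move=> e; rewrite /jacobi big_seq [RHS]big_seq; apply: eq_bigr => p.
rewrite mem_primes => /and3P[pp n0 pn].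
by rewrite -legendre_mod ?prime_gt0 // -(modn_dvdm a pn) e (modn_dvdm b pn) legendre_mod ?prime_gt0.
Qed.

Lemma legendre1 p : prime p -> legendre 1 p = 1.
Proof.
move=> pp; rewrite /legendre dvdn1 gtn_eqF ?prime_gt1 //.
case: existsP => // [[]]; exists (Ordinal (prime_gt1 pp)) => /=.
by rewrite muln1.
Qed.

Lemma jacobi1 n : jacobi 1 n = 1.
Proof.
rewrite /jacobi big_seq big1 // => p; rewrite mem_primes => /and3P[pp _ _].
by rewrite legendre1 // expr1n.
Qed.

Lemma mult_ind (P : nat -> Prop) : P 1%N -> (forall p, prime p -> P p) ->
  (forall a b, (0 < a)%N -> (0 < b)%N -> P a -> P b -> P (a * b)%N) ->
  forall n, (0 < n)%N -> P n.
Proof.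
move=> P1 Pp PM n; elim: n {-2}n (leqnn n) => [|N IH] n nN n0.
  by move: n0; rewrite lt0n -leqn0 nN.
case: (leqP n 1) => n1.
  by have -> : n = 1%N by apply/eqP; rewrite eqn_leq n1 n0.
have pp := pdiv_prime n1.
have e : n = (pdiv n * (n %/ pdiv n))%N by rewrite mulnC divnK // pdiv_dvd.
rewrite e; apply: PM.
- exact: prime_gt0.
- by rewrite divn_gt0 ?prime_gt0 // dvdn_leq // pdiv_dvd.
- exact: Pp.
apply: IH.
  rewrite -ltnS; apply: leq_trans nN; rewrite ltn_Pdiv //.
  exact: prime_gt1.
by rewrite divn_gt0 ?prime_gt0 // dvdn_leq // pdiv_dvd.
Qed.

Lemma half_oddM a b : odd a -> odd b -> odd ((a * b)./2) = odd a./2 (+) odd b./2.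
Proof.
move=> oa ob.
have ea := odd_double_half a; have eb := odd_double_half b.
rewrite oa in ea; rewrite ob in eb.
set x := a./2 in ea *; set y := b./2 in eb *.
rewrite -ea -eb.
have -> : ((true + x.*2) * (true + y.*2))%N = (true + (x.*2 * y + x + y).*2)%N.
  rewrite !doubleD -!muln2 /=; ring.
rewrite half_bit_double !oddD oddM odd_double /=.
by case: (odd x); case: (odd y).
Qed.

Lemma sign_half_mul a b : odd a -> odd b ->
  ((-1) ^+ ((a * b)./2) : int) = (-1) ^+ a./2 * (-1) ^+ b./2.
Proof.
by move=> oa ob; rewrite -exprD -signr_odd half_oddM // -oddD signr_odd.
Qed.


Lemma sign_mul_half c a b : odd a -> odd b ->
  ((-1) ^+ (c * (a * b)./2) : int) = (-1) ^+ (c * a./2) * (-1) ^+ (c * b./2).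
Proof.
move=> oa ob; rewrite -exprD -signr_odd oddM half_oddM // -[RHS]signr_odd oddD !oddM.
by case: (odd c); case: (odd a./2); case: (odd b./2).
Qed.

Lemma jacobi_neg n : (0 < n)%N -> odd n -> forall m, (n %| m.+1)%N -> jacobi m n = (-1) ^+ n./2.
Proof.
move: n; apply: mult_ind.
- by move=> _ m _; rewrite jacobi1n expr0.
- move=> p pp op m pm; rewrite jacobi_prime // -legendre_neg1 //.
  have p0 := prime_gt0 pp.
  rewrite -legendre_mod // -[RHS]legendre_mod //; congr legendre.
  apply/eqP; rewrite -(eqn_modDr 1) !addn1 prednK //.
  by rewrite modnn; move: pm; rewrite /dvdn.
move=> a b a0 b0 IHa IHb; rewrite oddM => /andP[oa ob] m abm.
rewrite jacobiMr // IHa ?IHb // ?sign_half_mul //.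
- exact: dvdn_trans (dvdn_mull a (dvdnn b)) abm.
exact: dvdn_trans (dvdn_mulr b (dvdnn a)) abm.
Qed.

Lemma jacobi_recip_prime p n : prime p -> odd p -> (0 < n)%N -> odd n -> coprime p n ->
  jacobi p n * jacobi n p = (-1) ^+ (p./2 * n./2).
Proof.
move=> pp op; move: n; apply: mult_ind.
- by move=> _ _; rewrite jacobi1n jacobi1 mulr1 muln0 expr0.
- move=> q qp oq cpq.
  have pq : p != q.
    by apply: contraTneq cpq => ->; rewrite /coprime gcdnn gtn_eqF ?prime_gt1.
  by rewrite !jacobi_prime // mulrC legendre_recip.
move=> a b a0 b0 IHa IHb; rewrite oddM coprimeMr => /andP[oa ob] /andP[ca cb].
rewrite jacobiMr // jacobiMl // sign_mul_half // -IHa // -IHb //.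
by rewrite mulrACA.
Qed.

Lemma jacobi_recip m n : (0 < m)%N -> (0 < n)%N -> odd m -> odd n -> coprime m n ->
  jacobi m n * jacobi n m = (-1) ^+ (m./2 * n./2).
Proof.
move=> + n0 + on; move: m; apply: mult_ind.
- by move=> _ _; rewrite jacobi1n jacobi1 mulr1 mul0n expr0.
- by move=> p pp op cpn; apply: jacobi_recip_prime.
move=> a b a0 b0 IHa IHb; rewrite oddM coprimeMl => /andP[oa ob] /andP[ca cb].
rewrite jacobiMr // jacobiMl // mulnC sign_mul_half // mulnC -IHa // mulnC -IHb //.
by rewrite mulrACA.
Qed.


Lemma sgn1_prod (s : seq nat) (F : nat -> int) :
  (forall p, p \in s -> sgn1 (F p)) -> sgn1 (\prod_(p <- s) F p).
Proof.
elim: s => [|p s IH] H; first by rewrite big_nil /sgn1 eqxx.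
rewrite big_cons sgn1M //; first by apply: H; rewrite inE eqxx.
by apply: IH => q qs; apply: H; rewrite inE qs orbT.
Qed.

Lemma jacobi_sgn1 m n : coprime m n -> sgn1 (jacobi m n).
Proof.
move=> cmn; apply: sgn1_prod => p; rewrite mem_primes => /and3P[pp n0 pn].
have : sgn1 (legendre m p).
  apply: legendre_sgn1; apply/negP => pm; have := coprime_dvdr pn cmn.
  by rewrite /coprime (gcdn_idPr pm) gtn_eqF ?prime_gt1.
move=> /orP[]/eqP->; first by rewrite expr1n /sgn1 eqxx.
exact: sgn1X.
Qed.

Lemma sgn1_sq a : sgn1 a -> a * a = 1.
Proof. by move=> /orP[]/eqP->. Qed.

End Prime.

Section CF.
Variable a : nat -> nat.
Local Notation S k := (cf_num a k).
Local Notation T k := (cf_den a k).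
Definition Sp k := (cf_conv a k).1.1.2.
Definition Tp k := (cf_conv a k).2.

Lemma S_succ k : S k.+1 = (a k.+1 * S k + Sp k)%N.
Proof. by rewrite /cf_num /Sp /=; case: (cf_conv a k) => [[[s s'] t] t']. Qed.
Lemma Sp_succ k : Sp k.+1 = S k.
Proof. by rewrite /cf_num /Sp /=; case: (cf_conv a k) => [[[s s'] t] t']. Qed.
Lemma T_succ k : T k.+1 = (a k.+1 * T k + Tp k)%N.
Proof. by rewrite /cf_den /Tp /=; case: (cf_conv a k) => [[[s s'] t] t']. Qed.
Lemma Tp_succ k : Tp k.+1 = T k.
Proof. by rewrite /cf_den /Tp /=; case: (cf_conv a k) => [[[s s'] t] t']. Qed.
Lemma T0 : T 0 = 1%N. Proof. by []. Qed.
Lemma Tp0 : Tp 0 = 0%N. Proof. by []. Qed.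

Lemma cf_det k : if odd k then (S k * Tp k = Sp k * T k + 1)%N
                 else (Sp k * T k = S k * Tp k + 1)%N.
Proof.
elim: k => [|k IH]; first by rewrite /cf_num /cf_den /Sp /Tp /= muln0 mul1n.
rewrite /= S_succ Sp_succ T_succ Tp_succ.
case: (odd k) IH => /= IH.
  by rewrite mulnDr mulnDl IH; ring.
by rewrite mulnDr mulnDl IH; ring.
Qed.

Lemma coprime_of_eq x y u v : (u * x = v * y + 1)%N -> coprime x y.
Proof.
move=> e; rewrite /coprime -dvdn1.
have h1 : (gcdn x y %| u * x)%N by rewrite dvdn_mull // dvdn_gcdl.
have h2 : (gcdn x y %| v * y)%N by rewrite dvdn_mull // dvdn_gcdr.
by move: h1; rewrite e dvdn_addr.
Qed.

Lemma coprime_T k : coprime (T k) (Tp k).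
Proof.
have := cf_det k; case: (odd k) => e.
  by rewrite coprime_sym; apply: coprime_of_eq e.
by apply: coprime_of_eq e.
Qed.

Lemma coprime_ST k : coprime (S k) (T k).
Proof.
have := cf_det k; case: (odd k) => e.
  by apply: (@coprime_of_eq _ _ (Tp k) (Sp k)); rewrite mulnC e mulnC.
by rewrite coprime_sym; apply: (@coprime_of_eq _ _ (Sp k) (Tp k)); rewrite e mulnC.
Qed.


Lemma half_even n : (n %% 4 = 1)%N -> ~~ odd n./2.
Proof. by move=> h; rewrite -divn2; lia. Qed.

Lemma half_oddp n : (n %% 4 = 3)%N -> odd n./2.
Proof. by move=> h; rewrite -divn2; lia. Qed.

Lemma coprime_even_odd x y : coprime x y -> ~~ odd x -> odd y.
Proof.
move=> c ox; apply/negPn/negP => oy.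
move: c; rewrite /coprime => /eqP g.
have : (2 %| gcdn x y)%N by rewrite dvdn_gcd !dvdn2 ox oy.
by rewrite g.
Qed.

Lemma sign_even (n : nat) : ~~ odd n -> ((-1) ^+ n : int) = 1.
Proof. by move=> h; rewrite -signr_odd (negbTE h). Qed.

Hypothesis Hpos : forall i, (0 < a i)%N.
Hypothesis HM4 : forall k, odd (T k) -> (T k %% 4 = if odd k then 3 else 1)%N.
Hypothesis Hev : forall k, ~~ odd (T k) -> a k.+1 = 1%N.

Lemma T_pos k : (0 < T k)%N.
Proof.
elim: k => [//|k IH]; rewrite T_succ.
by apply: leq_trans (leq_addr _ _); rewrite muln_gt0 Hpos.
Qed.

Lemma half_par k : odd (T k) -> odd (T k)./2 = odd k.
Proof.
move=> ok; have := HM4 ok; case: (odd k) => h.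
  exact: half_oddp.
by apply/negbTE/half_even.
Qed.

Lemma chainA k : odd (T k) -> jacobi (Tp k) (T k) = 1.
Proof.
elim/ltn_ind: k => k IH ok.
case: k IH ok => [|k'] IH ok; first by rewrite Tp0 T0 jacobi1n.
rewrite Tp_succ.
have [oT'|eT'] := boolP (odd (T k')).
  have rec := jacobi_recip (T_pos k') (T_pos k'.+1) oT' ok.
  have c : coprime (T k') (T k'.+1) by have := coprime_T k'.+1; rewrite Tp_succ coprime_sym.
  have := rec c.
  rewrite sign_even; last first.
    rewrite oddM !half_par //= ; by case: (odd k').
  rewrite (@jacobi_mod (T k'.+1) (Tp k') (T k')); last by rewrite T_succ modnMDl.
  by rewrite IH // mulr1.
case: k' IH ok eT' => [|k''] IH ok eT'; first by rewrite T0 in eT'.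
have a1 := Hev eT'.
have eT : T k''.+2 = (T k''.+1 + T k'')%N by rewrite T_succ a1 mul1n Tp_succ.
have cT := coprime_T k''.+1; rewrite Tp_succ in cT.
have oT'' : odd (T k'') := coprime_even_odd cT eT'.
have Tk0 := T_pos k''.+2.
have e1 : (T k''.+1 = (T k''.+2 - 1) * T k'' %[mod T k''.+2])%N.
  apply/eqP; rewrite -(eqn_modDr (T k'')) -eT.
  have -> : ((T k''.+2 - 1) * T k'' + T k'' = T k''.+2 * T k'')%N.
    by rewrite mulnBl mul1n subnK // leq_pmull.
  by rewrite modnn mulnC modnMl.
rewrite (jacobi_mod e1) jacobiMl // jacobi_neg //; last by rewrite subn1 prednK.
have c2 : coprime (T k'') (T k''.+2) by rewrite eT /coprime gcdnDr gcdnC; exact: cT.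
have rec := jacobi_recip (T_pos k'') Tk0 oT'' ok c2.
rewrite (@jacobi_mod (T k''.+2) (Tp k'') (T k'')) in rec; last first.
  by rewrite eT modnDr T_succ modnMDl.
rewrite IH // mulr1 in rec.
rewrite rec -exprD sign_even //.
rewrite oddD oddM !half_par //=.
by case: (odd k'').
Qed.

Lemma main_jac k : odd (T k) -> jacobi (S k) (T k) = 1.
Proof.
move=> ok.
have := cf_det k; case: ifP => odk e.
  have := jacobiMl (S k) (Tp k) ok; rewrite chainA // mulr1 => <-.
  rewrite (@jacobi_mod _ 1) ?jacobi1 //.
  by rewrite e modnMDl.
have := jacobiMl (S k) (Tp k) ok; rewrite chainA // mulr1 => <-.
rewrite jacobi_neg ?T_pos // ?sign_even ?half_par ?odk //.
by rewrite -addn1 -e dvdn_mull.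
Qed.

End CF.

Unset Implicit Arguments.

Definition aseq L i :=
  let j := (i %% L)%N in
  if j == 0%N then 1%N else if j == L.-1 then (if L == 2%N then 4%N else 1%N)
  else if j == 1%N then 3%N else 4%N.

Ltac splitEq := repeat match goal with |- context [?x == ?y] =>
  let H := fresh "E" in case: (x =P y) => H end.

Definition fL L k := if (k %% L == L.-1)%N then 0%N else if odd k then 3%N else 1%N.

Lemma modS L k : (0 < L)%N -> (k.+1 %% L = if k %% L == L.-1 then 0 else (k %% L).+1)%N.
Proof.
move=> L0; rewrite -addn1 -modnDml; case: eqP => e.
  by rewrite e addn1 prednK // modnn.
rewrite addn1 modn_small //.
have := ltn_pmod k L0; lia.
Qed.

Lemma I1 L k : (2 <= L)%N -> (cf_den (aseq L) k %% 4 = fL L k)%N.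
Proof.
move=> hL.
have L0 : (0 < L)%N by lia.
suff: (cf_den (aseq L) k %% 4 = fL L k /\ cf_den (aseq L) k.+1 %% 4 = fL L k.+1)%N by case.
elim: k => [|k [IH0 IH1]].
  rewrite T_succ T0 Tp0 muln1 addn0 /fL /aseq /= mod0n (modn_small hL).
  by split; splitEq; lia.
split => //.
rewrite T_succ Tp_succ -modnDm -modnMmr IH1 IH0 /fL /aseq (@modS L k.+1 L0) (@modS L k L0).
have := ltn_pmod k L0.
move: (k %% L)%N => i hi /=.
have L1 : (0 == L.-1) = false by apply/eqP; lia.
case: (eqVneq i L.-1) => Ei /=; case: (eqVneq i.+1 L.-1) => Ei1 /=; rewrite ?L1 /=;
  case: (eqVneq L 2) => EL; try (subst L) => /=;
  splitEq; case: (odd k) => /=; try lia; try by [].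
Qed.

Lemma odd_T L k : (2 <= L)%N -> odd (cf_den (aseq L) k) = (k %% L != L.-1)%N.
Proof.
move=> hL; have := I1 L k hL; rewrite /fL.
move: (cf_den (aseq L) k) => t; case: eqP => _ /=; case: (odd k); lia.
Qed.

Theorem theorem8 (L : nat) (hL : (2 <= L)%N) :
  exists a : nat -> nat,
    (forall i, a i \in [:: 1; 2; 3; 4]%N) /\
    (exists2 p : nat, (0 < p)%N & forall i, a (i + p)%N = a i) /\
    (forall k, jacobi_seq a k =
               if (k %% L == L.-1)%N then JStar else JInt 1%R).
Proof.
have L0 : (0 < L)%N by lia.
exists (aseq L); split.
  by move=> i; rewrite /aseq; repeat case: ifP.
split.
  by exists L => // i; rewrite /aseq modnDr.
have Hpos : forall i, (0 < aseq L i)%N by move=> i; rewrite /aseq; repeat case: ifP.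
have HM4 : forall k, odd (cf_den (aseq L) k) ->
    (cf_den (aseq L) k %% 4 = if odd k then 3 else 1)%N.
  move=> k; rewrite odd_T // => ne; rewrite I1 // /fL (negbTE ne).
  by [].
have Hev : forall k, ~~ odd (cf_den (aseq L) k) -> aseq L k.+1 = 1%N.
  move=> k; rewrite odd_T // negbK => /eqP e.
  by rewrite /aseq (@modS L k L0) e eqxx.
move=> k; rewrite /jacobi_seq /jac_sym odd_T //.
case: eqP => e //=.
rewrite (main_jac Hpos HM4 Hev) //.
by rewrite odd_T //; apply/eqP.
Qed.
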